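(* Let $4.999\le r\le 5$ and $1\le\theta\le 2.13$, and let $q(x)=1-(r-\theta)x+(r-2\theta)x^2+\theta x^3$. Then all three roots of $q$ are real: one root $\alpha$ satisfies $\alpha<-1$, and the other two roots $\beta,\gamma$ satisfy $0<\gamma<0.56<\beta<1$.
   Context: Equivalently $q(x)=1+rx(x-1)+\theta x(x-1)^2=(1-x/\alpha)(1-x/\beta)(1-x/\gamma)$ with $\alpha,\beta,\gamma$ the roots of $q$. *)

(* Defs.v *)
From Stdlib Require Import Reals.
Open Scope R_scope.

Definition q (r theta x : R) : R :=
  1 - (r - theta) * x + (r - 2 * theta) * x ^ 2 + theta * x ^ 3.

(* Main.v *)
Require Import Defs.
From Stdlib Require Import Reals Lra Psatz.
Open Scope R_scope.

Lemma q_cont r t : continuity (fun x => q r t x).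
Proof. unfold q; reg. Qed.

Lemma q_opp_cont r t : continuity (fun x => - q r t x).
Proof. unfold q; reg. Qed.

Theorem mainTheorem7 (r theta : R) :
  4999 / 1000 <= r <= 5 -> 1 <= theta <= 213 / 100 ->
  exists alpha beta gamma : R,
    alpha < -1 /\ 0 < gamma /\ gamma < 56 / 100 /\ 56 / 100 < beta /\ beta < 1 /\
    (forall x : R, q r theta x = theta * (x - alpha) * (x - beta) * (x - gamma)).
Proof.
  intros [Hr1 Hr2] [Ht1 Ht2].
  assert (Hm : q r theta (56/100) < 0) by (unfold q; simpl; nra).
  assert (H0 : q r theta 0 = 1) by (unfold q; simpl; ring).
  assert (H1 : q r theta 1 = 1) by (unfold q; simpl; ring).
  assert (Hn : 0 < q r theta (-1)) by (unfold q; simpl; nra).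
  destruct (IVT _ 0 (56/100) (q_opp_cont r theta)) as [g [[Hg1 Hg2] Hg]]; try lra.
  destruct (IVT _ (56/100) 1 (q_cont r theta)) as [b [[Hb1 Hb2] Hb]]; try lra.
  assert (g <> 0) by (intro; subst; lra).
  assert (g <> 56/100) by (intro; subst; lra).
  assert (b <> 1) by (intro; subst; lra).
  assert (b <> 56/100) by (intro; subst; lra).
  assert (Hg0 : q r theta g = 0) by lra.
  set (c := r - 2*theta + theta*(b+g)).
  set (EE := -(r-theta) + (r-2*theta)*(b+g) + theta*(b*b+b*g+g*g)).
  assert (HE : q r theta b - q r theta g = (b-g)*EE) by (unfold q, EE; ring).
  assert (E0 : EE = 0).
  { rewrite Hb in HE. rewrite Hg0 in HE. assert (b - g <> 0) by lra.
    apply (Rmult_eq_reg_l (b-g)); lra. }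
  assert (Hid : forall x, q r theta x - (x-b)*(x-g)*(theta*x+c) = (1 - c*(b*g)) + x*EE)
    by (intro x; unfold q, EE, c; ring).
  assert (Hcp : 1 - c*(b*g) = 0).
  { specialize (Hid b). rewrite Hb, E0 in Hid. nra. }
  exists (-c/theta), b, g.
  assert (Hc : theta < c).
  { specialize (Hid (-1)). rewrite Hcp, E0 in Hid.
    assert (0 < (-1-b)*(-1-g)) by nra. nra. }
  repeat split; try lra.
  - apply (Rmult_lt_reg_l theta); try lra. field_simplify; lra.
  - intro x. specialize (Hid x). rewrite Hcp, E0 in Hid.
    replace (theta * (x - - c / theta) * (x - b) * (x - g)) with ((x-b)*(x-g)*(theta*x+c))
      by (field; lra). lra.
Qed.
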